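(* Let $G$ be a finite simple graph with $m$ edges and maximum degree $\Delta$, such that each connected component of $G$ has at least one edge. Then $$ M_1(G) \le \max \big\{2\Delta^2 +m^2 +(6-2\Delta) m - 2\Delta -4\,,\; 2\Delta^2 +m^2 +(4-2\Delta) m + 4 \,,\; m(m-1) \big\}, $$ where $M_1(G)=\sum_{u\in V(G)} d_u^2$ is the first Zagreb index.
   Context: $d_u$ denotes the degree of vertex $u$. The first Zagreb index is $M_1(G)=\sum_{uv\in E(G)}(d_u+d_v)=\sum_{u\in V(G)}d_u^2$. *)

(* Defs.v *)
From mathcomp Require Import all_boot all_order all_algebra.
Set Implicit Arguments. Unset Strict Implicit. Unset Printing Implicit Defensive.

Definition simple_graph (T : finType) (e : rel T) : Prop :=
  symmetric e /\ irreflexive e.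

Definition edges (T : finType) (e : rel T) : {set {set T}} :=
  [set A : {set T} | [exists u, exists v, e u v && (A == [set u; v])]].

Definition nedges (T : finType) (e : rel T) : nat := #|edges e|.

Definition deg (T : finType) (e : rel T) (u : T) : nat := #|[set v | e u v]|.

(* maximum degree Delta (0 for the empty graph) *)
Definition maxdeg (T : finType) (e : rel T) : nat := \max_(u : T) deg e u.

Definition M1 (T : finType) (e : rel T) : nat := \sum_(u : T) (deg e u) ^ 2.

Definition components_have_edges (T : finType) (e : rel T) : Prop :=
  forall u : T, exists v w : T, connect e u v && e v w.

(* Main.v *)
Require Import Defs.
From mathcomp Require Import all_boot all_order all_algebra.
From mathcomp Require Import zify.
Import Order.TTheory GRing.Theory Num.Theory.

Section Graph.
Variables (T : finType) (e : rel T).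
Hypotheses (sym : symmetric e) (irr : irreflexive e).

Lemma card_nat (A : {pred T}) : #|A| = \sum_x (x \in A : nat).
Proof. by rewrite -sum1_card big_mkcond; apply: eq_bigr => x _; case: (x \in A). Qed.

Lemma degE u : deg e u = \sum_v (e u v : nat).
Proof. by rewrite /deg card_nat; apply: eq_bigr => v _; rewrite inE. Qed.

Lemma edge_nbhd u : #|[set A in edges e | u \in A]| = deg e u.
Proof.
have -> : [set A in edges e | u \in A] = [set [set u; v] | v in [set v | e u v]].
  apply/setP => A; rewrite !inE; apply/andP/imsetP.
  - case=> + uA => /existsP [x /existsP [y /andP [exy /eqP AE]]].
    move: uA; rewrite AE !inE => /orP [/eqP uE | /eqP uE]; subst u.
      by exists y; rewrite ?inE.
    by exists x; rewrite ?inE 1?sym // setUC.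
  - case=> v; rewrite inE => euv ->; split; last by rewrite !inE eqxx.
    by apply/existsP; exists u; apply/existsP; exists v; rewrite euv eqxx.
rewrite card_in_imset // => v1 v2; rewrite !inE => e1 e2 E.
have : v1 \in [set u; v2] by rewrite -E !inE eqxx orbT.
rewrite !inE => /orP [/eqP v1u | /eqP //].
by move: e1; rewrite v1u irr.
Qed.

Lemma edge_card A : A \in edges e -> #|A| = 2.
Proof.
rewrite inE => /existsP [x /existsP [y /andP [exy /eqP ->]]].
rewrite cards2; case: eqP => // xy; by move: exy; rewrite xy irr.
Qed.

Lemma handshake : \sum_u deg e u = 2 * nedges e.
Proof.
transitivity (\sum_u \sum_(A in edges e) (u \in A : nat)).
  apply: eq_bigr => u _; rewrite -edge_nbhd -sum1_card.
  rewrite (eq_bigl (fun A => (A \in edges e) && (u \in A))); last by move=> A; rewrite inE.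
  by rewrite big_mkcondr; apply: eq_bigr => A _; case: (u \in A).
rewrite exchange_big /nedges -sum1_card big_distrr /=.
apply: eq_bigr => A HA; rewrite -(edge_card _ HA) card_nat muln1.
by apply: eq_bigr.
Qed.

Lemma adj_bound u v : e u v -> deg e u + deg e v <= nedges e + 1.
Proof.
move=> euv.
rewrite -!edge_nbhd -cardsUI /nedges.
apply: leq_add.
  apply: subset_leq_card; rewrite subUset; apply/andP; split;
    by apply/subsetP => A; rewrite inE => /andP [].
rewrite -(cards1 [set u; v]); apply: subset_leq_card.
apply/subsetP => A; rewrite !inE => /andP [/andP [HA uA] /andP [_ vA]].
have {}HA : A \in edges e by rewrite inE.
rewrite eq_sym eqEcard (edge_card _ HA) cards2.
have -> : u != v by apply/eqP => uv; move: euv; rewrite uv irr.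
rewrite andbT subUset !sub1set uA vA //.
Qed.

Lemma M1_bound : M1 e <= nedges e * (nedges e + 1).
Proof.
have E1 : M1 e = \sum_u \sum_v (e u v) * deg e u.
  rewrite /M1; apply: eq_bigr => u _.
  by rewrite -big_distrl /= -degE expnS expn1.
have E2 : M1 e = \sum_u \sum_v (e u v) * deg e v.
  rewrite exchange_big /M1; apply: eq_bigr => v _.
  rewrite -big_distrl /= degE expnS expn1; congr (_ * _).
  by apply: eq_bigr => u _; rewrite sym.
suff : 2 * M1 e <= 2 * (nedges e * (nedges e + 1)) by rewrite leq_pmul2l.
rewrite [X in _ <= X]mulnA -handshake big_distrl /=.
rewrite mul2n -addnn {1}E1 E2 -big_split /=.
apply: leq_sum => u _; rewrite [X in _ <= X * _]degE big_distrl /= -big_split /=.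
apply: leq_sum => v _; rewrite -mulnDr.
case euv: (e u v); rewrite ?mul0n ?mul1n //.
exact: adj_bound.
Qed.

End Graph.

Section Del.
Variables (T : finType) (e : rel T).
Hypotheses (sym : symmetric e) (irr : irreflexive e).
Variable w : T.
Definition del : rel T := fun u v => e u v && (u != w) && (v != w).

Lemma del_sym : symmetric del.
Proof. by move=> u v; rewrite /del sym andbAC -andbA [(v != w) && _]andbC andbA. Qed.
Lemma del_irr : irreflexive del.
Proof. by move=> u; rewrite /del irr. Qed.

Lemma deg_del_w : deg del w = 0.
Proof. by rewrite degE big1 // => v _; rewrite /del eqxx andbF. Qed.

Lemma deg_del v : v != w -> deg e v = deg del v + e w v.
Proof.
move=> vw; rewrite !degE (bigD1 w) //= [in RHS](bigD1 w) //= /del eqxx andbF add0n.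
rewrite addnC sym; congr (_ + _); apply: eq_bigr => x xw.
by rewrite vw xw !andbT.
Qed.

Lemma degw_sum : deg e w = \sum_(v | v != w) (e w v : nat).
Proof. by rewrite degE (bigD1 w) //= irr. Qed.

Lemma sum_deg_del : \sum_v deg e v = \sum_v deg del v + 2 * deg e w.
Proof.
rewrite (bigD1 w) //= [in RHS](bigD1 w) //= deg_del_w add0n.
rewrite (eq_bigr (fun v => deg del v + e w v)); last by move=> v vw; rewrite deg_del.
rewrite big_split /= -degw_sum; lia.
Qed.

Lemma M1_del : M1 e <= deg e w ^ 2 + deg e w + M1 del + 2 * \sum_v deg del v.
Proof.
rewrite /M1 (bigD1 w) //= [\sum_v deg del v ^ 2](bigD1 w) //= [\sum_v deg del v](bigD1 w) //=.
rewrite deg_del_w add0n exp0n // add0n -!addnA leq_add2l.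
rewrite degw_sum big_distrr /= -!big_split /=.
apply: leq_sum => v vw; rewrite deg_del //.
case: (e w v) => /=; nia.
Qed.
End Del.

Lemma key (T : finType) (e : rel T) : symmetric e -> irreflexive e ->
  exists k, nedges e = k + maxdeg e /\
    M1 e <= maxdeg e * maxdeg e + maxdeg e + k * (k + 1) + 4 * k.
Proof.
move=> sym irr.
case: (posnP #|T|) => hT.
  have nox : forall x : T, False by move=> x; move: hT; rewrite (cardD1 x) inE.
  have Hs : forall F : T -> nat, \sum_x F x = 0.
    by move=> F; rewrite big_pred0 // => x; case: (nox x).
  have := handshake _ _ sym irr; rewrite Hs => hm.
  exists 0; rewrite /maxdeg big_pred0; last by move=> x; case: (nox x).
  by rewrite /M1 Hs; split; lia.
have [w Hw] := bigop.eq_bigmax (deg e) hT.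
rewrite /maxdeg Hw.
have s1 := del_sym _ _ sym w; have i1 := del_irr _ _ irr w.
have H1 := handshake _ _ sym irr; have H2 := handshake _ _ s1 i1.
have H3 := sum_deg_del _ _ sym irr w.
have H4 := M1_del _ _ sym irr w.
have H5 := M1_bound _ _ s1 i1.
exists (nedges (del _ e w)); split; first lia.
have E : deg e w ^ 2 = deg e w * deg e w by rewrite expnS expn1.
rewrite E in H4.
nia.
Qed.

Local Open Scope ring_scope.

Theorem theorem2p1 (T : finType) (e : rel T) :
  simple_graph e -> components_have_edges e ->
  let m : int := (nedges e)%:Z in
  let D : int := (maxdeg e)%:Z in
  ((M1 e)%:Z <=
     Num.max (2 * D ^+ 2 + m ^+ 2 + (6 - 2 * D) * m - 2 * D - 4)
       (Num.max (2 * D ^+ 2 + m ^+ 2 + (4 - 2 * D) * m + 4)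
                (m * (m - 1))))%R.
Proof.
move=> [sym irr] _; cbv zeta.
have [k [hm hM]] := key _ _ sym irr.
have hM' : (M1 e)%:Z <= (maxdeg e)%:Z * (maxdeg e)%:Z + (maxdeg e)%:Z + k%:Z * (k%:Z + 1) + 4 * k%:Z.
  by rewrite -[_ <= _]/(M1 e <= _)%N; lia.
rewrite hm PoszD !expr2 !le_max.
case: (leqP 4 (k + 3 * maxdeg e)) => h.
  by apply/orP; left; nia.
by apply/orP; right; apply/orP; left; nia.
Qed.
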